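(* Let $S$ be a finite alphabet and let $h$ be a cellular automaton on $S^{\mathbb{Z}}$ which is an involution. Let $N\subset\mathbb{Z}$ be its minimal neighbourhood, so that $h(x)_k=\phi(x_{k+n_1},\dots,x_{k+n_t})$ with $N=\{n_1<\dots<n_t\}$ and $\phi$ depending essentially on each argument. Then $h$ is left-permutative if and only if $h$ is one-way to the right, i.e. if and only if $\min N\ge 0$.
   Context: A cellular automaton (CA) on $S^{\mathbb{Z}}$ is a continuous, shift-commuting map, given by a local rule $\phi$ on a finite neighbourhood. A CA is an involution if $h\circ h=\mathrm{id}$. The CA $h$ is left-permutative if, for every fixed values of the other arguments, the map $a\mapsto \phi(a,x_{n_2},\dots,x_{n_t})$ (variation of the argument at the leftmost neighbourhood position $n_1=\min N$) is a bijection of $S$. The CA $h$ is one-way to the right if its neighbourhood is contained in $\mathbb{N}_0=\{0,1,2,\dots\}$, i.e. $h(x)_k$ depends only on $x_j$ with $j\ge k$. *)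

(* Defs.v *)
From HB Require Import structures.
From mathcomp Require Import all_boot all_order all_algebra.
Set Implicit Arguments. Unset Strict Implicit. Unset Printing Implicit Defensive.
Import Order.TTheory GRing.Theory Num.Theory.
Local Open Scope ring_scope.

Definition config (S : finType) := int -> S.

Definition shift (S : finType) (x : config S) : config S := fun k => x (k + 1).

Definition upd (S : finType) (x : config S) (n : int) (a : S) : config S :=
  fun j => if j == n then a else x j.

(* h is a cellular automaton: shift-commuting, and h(x)_0 is determined by
   x on a finite window D (local rule on a finite neighbourhood; by
   Curtis-Hedlund-Lyndon this is equivalent to continuous + shift-commuting). *)
Definition is_CA (S : finType) (h : config S -> config S) : Prop :=
  (forall x, h (shift x) = shift (h x)) /\
  exists D : seq int, forall x y : config S,
      (forall d, d \in D -> x d = y d) -> h x 0 = h y 0.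

Definition involution (S : finType) (h : config S -> config S) : Prop :=
  forall x, h (h x) = x.

Definition in_min_nbhd (S : finType) (h : config S -> config S) (n : int) : Prop :=
  exists (x : config S) (a : S), h (upd x n a) 0 <> h x 0.

Definition left_permutative (S : finType) (h : config S -> config S) : Prop :=
  forall n1 : int, in_min_nbhd h n1 ->
    (forall n, in_min_nbhd h n -> n1 <= n) ->
    forall x : config S, bijective (fun a : S => h (upd x n1 a) 0).

Definition one_way_right (S : finType) (h : config S -> config S) : Prop :=
  forall n : int, in_min_nbhd h n -> 0 <= n.

(* Main.v *)
Require Import Defs.
From HB Require Import structures.
From mathcomp Require Import all_boot all_order all_algebra.
From Stdlib Require Import Classical FunctionalExtensionality.
Set Implicit Arguments. Unset Strict Implicit. Unset Printing Implicit Defensive.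
Import Order.TTheory GRing.Theory Num.Theory.
Local Open Scope ring_scope.

Definition tr (S : finType) (c : int) (x : config S) : config S := fun j => x (j + c).

Lemma tr0 (S : finType) (x : config S) : tr 0 x = x.
Proof. by apply: functional_extensionality => j; rewrite /tr addr0. Qed.

Lemma tr_comp (S : finType) a b (x : config S) : tr a (tr b x) = tr (a + b) x.
Proof. by apply: functional_extensionality => j; rewrite /tr addrA. Qed.

Lemma h_tr_nat (S : finType) (h : config S -> config S) (hCA : is_CA h) (n : nat) x :
  h (tr n%:Z x) = tr n%:Z (h x).
Proof.
case: hCA => hs _.
elim: n x => [|n IH] x; first by rewrite !tr0.
have E : forall y : config S, tr n.+1%:Z y = shift (tr n%:Z y).
  move=> y; apply: functional_extensionality => j.
  by rewrite /tr /shift intS addrA.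
by rewrite !E hs IH.
Qed.

Lemma h_tr (S : finType) (h : config S -> config S) (hCA : is_CA h) c x :
  h (tr c x) = tr c (h x).
Proof.
case: c => n.
  exact: h_tr_nat.
have Hm : Negz n = - (n.+1%:Z) by rewrite NegzE.
have K : tr (n.+1%:Z) (tr (Negz n) x) = x by rewrite tr_comp Hm addrN tr0.
rewrite -{2}K h_tr_nat // tr_comp Hm addNr tr0 //.
Qed.

Lemma hcoord (S : finType) (h : config S -> config S) (hCA : is_CA h) z k :
  h z k = h (tr k z) 0.
Proof. by rewrite h_tr // /tr add0r. Qed.

Lemma notN (S : finType) (h : config S -> config S) n :
  ~ in_min_nbhd h n -> forall x a, h (upd x n a) 0 = h x 0.
Proof. move=> H x a; apply: NNPP => H'; apply: H; by exists x, a. Qed.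

Lemma dep (S : finType) (h : config S -> config S) (hCA : is_CA h) (n1 : int) :
  (forall n, in_min_nbhd h n -> n1 <= n) ->
  forall x y : config S, (forall j, n1 <= j -> x j = y j) -> h x 0 = h y 0.
Proof.
move=> Hmin x y Hxy.
case: hCA => _ [D HD].
pose z (s : seq int) : config S :=
  fun j => if (j \in s) && ~~ (n1 <= j) then y j else x j.
have Hz : forall s, h (z s) 0 = h x 0.
  elim=> [|d s IH].
    have -> : z [::] = x by apply: functional_extensionality => j; rewrite /z in_nil.
    by [].
  case Hd: (n1 <= d).
    have -> : z (d :: s) = z s.
      apply: functional_extensionality => j; rewrite /z in_cons.
      case: eqP => [->|]; last by [].
      by rewrite Hd /= andbF; case: (d \in s).
    exact: IH.
  have -> : z (d :: s) = upd (z s) d (y d).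
    apply: functional_extensionality => j; rewrite /z /upd in_cons.
    by case: eqP => [->|] //=; rewrite Hd.
  rewrite notN //; move=> /Hmin; by rewrite Hd.
rewrite -(Hz D); apply: HD => d dD.
rewrite /z dD /=; case Hd: (n1 <= d) => //=.
by rewrite Hxy.
Qed.

Lemma inN_D (S : finType) (h : config S -> config S) (hCA : is_CA h) :
  exists D : seq int, forall n, in_min_nbhd h n -> n \in D.
Proof.
case: hCA => _ [D HD]; exists D => n [x [a Ha]].
apply: NNPP => nD; apply: Ha; apply: HD => d dD; rewrite /upd.
case: eqP => // E; subst; by rewrite dD in nD.
Qed.

Lemma min_ex (P : int -> Prop) (s : seq int) :
  (exists n, P n /\ n \in s) -> exists m, P m /\ (forall n, P n -> n \in s -> m <= n).
Proof.
elim: s => [[n [_]] //|d s IH] Hex.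
case: (classic (exists n, P n /\ n \in s)) => [/IH [m [Pm Hm]]|Hno].
  case: (classic (P d)) => Pd.
    case: (leP d m) => Hdm.
      exists d; split=> // n Pn; rewrite in_cons => /orP [/eqP ->//|ns].
      exact: le_trans Hdm (Hm n Pn ns).
    exists m; split=> // n Pn; rewrite in_cons => /orP [/eqP ->|ns].
      exact: ltW.
    exact: Hm.
  exists m; split=> // n Pn; rewrite in_cons => /orP [/eqP E|ns]; last exact: Hm.
  by subst.
case: Hex => n [Pn]; rewrite in_cons => /orP [/eqP E|ns]; last first.
  by exfalso; apply: Hno; exists n.
subst; exists d; split=> // n' Pn'; rewrite in_cons => /orP [/eqP ->//|ns].
by exfalso; apply: Hno; exists n'.
Qed.

Lemma upd_id (S : finType) (x : config S) n : upd x n (x n) = x.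
Proof. by apply: functional_extensionality => j; rewrite /upd; case: eqP => [->|]. Qed.

Theorem mainTheorem5 (S : finType) (h : config S -> config S)
  (hCA : is_CA h) (hinv : involution h) :
  left_permutative h <-> one_way_right h.
Proof.
split.
- move=> LP n Hn; case: (leP 0 n) => // Hlt; exfalso.
  case: (inN_D hCA) => D HD.
  case: (@min_ex (in_min_nbhd h) D); first by exists n; split=> //; exact: HD.
  move=> n1 [Hn1 Hmin'].
  have Hmin : forall n, in_min_nbhd h n -> n1 <= n.
    by move=> m Hm; apply: Hmin' => //; exact: HD.
  have Hn1neg : n1 < 0 by apply: le_lt_trans (Hmin _ Hn) Hlt.
  have inj := fun z => bij_inj (LP n1 Hn1 Hmin z).
  case: (Hn1) => x [a0 Ha0].
  have a0ne : a0 <> x n1 by move=> E; apply: Ha0; rewrite E upd_id.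
  pose c := x (n1 + n1).
  pose b := if a0 == c then x n1 else a0.
  have bc : b <> c.
    rewrite /b; case: eqP => [E|E] //; by rewrite -E => /esym.
  pose y := upd x (n1 + n1) b.
  have CA : forall j, n1 < j -> h y j = h x j.
    move=> j Hj; rewrite !(hcoord hCA _ j).
    apply: (dep hCA Hmin) => i Hi; rewrite /tr /y /upd.
    by rewrite gt_eqF // ler_ltD.
  have CB : h y n1 <> h x n1.
    rewrite !(hcoord hCA _ n1) => E; apply: bc.
    have E1 : tr n1 y = upd (tr n1 x) n1 b.
      apply: functional_extensionality => i; rewrite /tr /y /upd.
      by rewrite (inj_eq (addIr n1)).
    have E2 : tr n1 x = upd (tr n1 x) n1 c by rewrite upd_id.
    rewrite E1 {2}E2 in E; exact: (inj _ _ _ E).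
  have y0 : y 0 = x 0.
    rewrite /y /upd; case: eqP => // E.
    have : n1 + n1 < 0 by rewrite -(addr0 0) ltrD.
    by rewrite -E ltxx.
  apply: CB; apply: (inj (h x)).
  rewrite upd_id; transitivity (h (h y) 0); last by rewrite !hinv.
  apply: esym; apply: (dep hCA Hmin) => j Hj; rewrite /upd.
  case: eqP => [->//|E]; apply: CA.
  by rewrite lt_neqAle Hj andbT; apply/eqP => E'; apply: E.
- move=> OWR n1 Hn1 Hmin x; apply: injF_bij => a b Heq.
  have n1ge : 0 <= n1 by apply: OWR.
  have Cl : forall k, 0 <= k -> h (upd x n1 a) k = h (upd x n1 b) k.
    move=> k Hk; rewrite !(hcoord hCA _ k).
    case: (leP k 0) => Hk0.
      have -> : k = 0 by apply/eqP; rewrite eq_le Hk0 Hk.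
      by rewrite !tr0.
    apply: (dep hCA Hmin) => j Hj; rewrite /tr /upd.
    have Hjk : n1 < j + k by rewrite -(addr0 n1); apply: ler_ltD.
    case: eqP => // E; by rewrite E ltxx in Hjk.
  have Ea : a = h (h (upd x n1 a)) n1 by rewrite hinv /upd eqxx.
  have Eb : b = h (h (upd x n1 b)) n1 by rewrite hinv /upd eqxx.
  rewrite Ea Eb !(hcoord hCA _ n1).
  apply: (dep hCA Hmin) => j Hj; rewrite /tr; apply: Cl.
  by apply: addr_ge0 => //; apply: le_trans Hj.
Qed.
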